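(* For the SSBM of the context with $k\ge2$ clusters of general sizes $(n_1,\dots,n_k)$ and aspect ratio $\rho$ satisfying $\sqrt\rho>1-\frac1{4k(2+\sqrt k)}$, it holds that $V_{k-1}(\mathcal L_{sym})=\Theta R_{k-1}$, where $R_{k-1}\in\mathbb R^{k\times(k-1)}$ consists of the $k-1$ smallest (orthonormal) eigenvectors of $\bar C$. Furthermore, $$\lambda_{n-k+1}(\mathcal L_{sym})-\lambda_{n-k+2}(\mathcal L_{sym})\ge\frac{1-2\eta}k.$$
   Context: SSBM: integers $n\ge2,k\ge2$, $p\in(0,1]$, $\eta\in[0,1/2)$, partition of $[n]$ into nonempty clusters $C_1,\dots,C_k$, $|C_i|=n_i$; edges present independently w.p. $p$, signed $+1$ within and $-1$ across clusters, signs flipped independently w.p. $\eta$. $A$ symmetric signed adjacency, $\bar D=\mathrm{diag}(|A|\mathbf1)$, $\bar d=p(n-1)$, $\mathcal L_{sym}=I-(\mathbb E\bar D)^{-1/2}\mathbb EA(\mathbb E\bar D)^{-1/2}$ with eigenvalues $\lambda_1\ge\dots\ge\lambda_n$. $\rho=\min_in_i/\max_in_i$. $\Theta_{ji}=1/\sqrt{n_i}$ if $j\in C_i$ else 0. $V_{k-1}(M)$: $n\times(k-1)$ matrix of orthonormal eigenvectors of the $k-1$ smallest eigenvalues. $\bar\alpha=1+\frac p{\bar d}(1-2\eta)$, $\bar C=\bar\alpha I_k-\bar B$ with $\bar B_{ii}=\frac{n_ip}{\bar d}(1-2\eta)$, $\bar B_{ii'}=-\frac{\sqrt{n_in_{i'}}p}{\bar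 d}(1-2\eta)$ for $i\ne i'$. *)

(* Defs.v *)
From mathcomp Require Import all_boot all_order all_algebra.
From mathcomp Require Import reals.
Set Implicit Arguments. Unset Strict Implicit. Unset Printing Implicit Defensive.
Import Order.TTheory GRing.Theory Num.Theory.
Local Open Scope ring_scope.

Section SSBM.
Variable R : realType.

Definition is_spectrum (N : nat) (M : 'M[R]_N) (s : seq R) : Prop :=
  [/\ size s = N, sorted (fun x y : R => y <= x) s
    & char_poly M = \prod_(x <- s) ('X - x%:P)].

(* V_m(M): N x m matrix of orthonormal eigenvectors associated with the m
   smallest eigenvalues; column j (0-indexed) is an eigenvector for the
   (j+1)-th smallest eigenvalue λ_{N-j}. *)
Definition is_V_smallest (N m : nat) (M : 'M[R]_N) (V : 'M[R]_(N, m)) : Prop :=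
  exists s, is_spectrum M s /\ V^T *m V = 1%:M /\
    forall j : 'I_m, M *m col j V = nth 0 s (N.-1 - j) *: col j V.

Definition csize (n k : nat) (c : 'I_n -> 'I_k) (i : 'I_k) : nat :=
  #|[set j | c j == i]|.

Definition aspect_ratio (n k : nat) (c : 'I_n -> 'I_k) : R :=
  (\big[minn/n]_(i : 'I_k) csize c i)%:R / (\max_(i : 'I_k) csize c i)%:R.

Definition Theta (n k : nat) (c : 'I_n -> 'I_k) : 'M[R]_(n, k) :=
  \matrix_(j, i) if c j == i then (Num.sqrt (csize c i)%:R)^-1 else 0.

(* Expectation of A_{jl} (j <> l): edge w.p. p, true sign s (+1 within,
   -1 across), flipped w.p. eta.  No self loops. *)
Definition EA (n k : nat) (c : 'I_n -> 'I_k) (p eta : R) : 'M[R]_n :=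
  \matrix_(j, l)
    if j == l then 0
    else let s : R := if c j == c l then 1 else -1 in
         p * ((1 - eta) * s + eta * (- s)).

Definition EabsA (n : nat) (p : R) : 'M[R]_n :=
  \matrix_(j, l) if j == l then 0 else p.

Definition EDbar (n : nat) (p : R) : 'M[R]_n :=
  diag_mx (\row_j \sum_l EabsA n p j l).

Definition Lsym (n k : nat) (c : 'I_n -> 'I_k) (p eta : R) : 'M[R]_n :=
  let Dm12 := diag_mx (\row_j (Num.sqrt (EDbar n p j j))^-1) in
  1%:M - Dm12 *m EA c p eta *m Dm12.

Definition dbar (n : nat) (p : R) : R := p * (n.-1)%:R.

Definition alphabar (n : nat) (p eta : R) : R := 1 + p / dbar n p * (1 - 2 * eta).

Definition Bbar (n k : nat) (c : 'I_n -> 'I_k) (p eta : R) : 'M[R]_k :=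
  \matrix_(i, i')
    if i == i' then (csize c i)%:R * p / dbar n p * (1 - 2 * eta)
    else - (Num.sqrt ((csize c i)%:R * (csize c i')%:R) * p / dbar n p * (1 - 2 * eta)).

Definition Cbar (n k : nat) (c : 'I_n -> 'I_k) (p eta : R) : 'M[R]_k :=
  (alphabar n p eta)%:M - Bbar c p eta.

End SSBM.

(* Main.v *)
Require Import Defs.
From mathcomp Require Import all_boot all_order all_algebra.
From mathcomp Require Import reals.
From mathcomp Require Import ring lra zify.
Import Order.TTheory GRing.Theory Num.Theory.
Local Open Scope ring_scope.

Lemma horner_char (R : comNzRingType) n (A : 'M[R]_n) (x : R) :
  (char_poly A).[x] = \det (x%:M - A).
Proof.
have -> : (char_poly A).[x] = horner_eval x (char_poly A) by [].
rewrite /char_poly -(det_map_mx (horner_eval x)); congr (\det _).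
apply/matrixP => i j; rewrite !mxE /=.
by rewrite horner_evalE hornerD hornerN hornerMn hornerX hornerC.
Qed.

Lemma det_sylvester (R : comNzRingType) n k (A : 'M[R]_(n,k)) (B : 'M[R]_(k,n)) :
  \det (1%:M + A *m B) = \det (1%:M + B *m A).
Proof.
have e1 : block_mx 1%:M (-A) B 1%:M =
   block_mx 1%:M 0 B 1%:M *m block_mx 1%:M (-A) 0 (1%:M + B *m A).
  rewrite mulmx_block !mul1mx ?mul0mx ?mulmx1 ?mulmx0 ?addr0 ?add0r.
  by rewrite mulmxN addrCA addNr addr0.
have e2 : block_mx 1%:M (-A) B 1%:M =
   block_mx (1%:M + A *m B) (-A) 0 1%:M *m block_mx 1%:M 0 B 1%:M.
  rewrite mulmx_block !mul1mx ?mul0mx ?mulmx1 ?mulmx0 ?addr0 ?add0r.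
  by rewrite mulNmx addrK.
have := congr1 determinant e1; rewrite e2 !det_mulmx.
rewrite det_lblock det_ublock !det_ublock !det1 !mul1r ?mulr1.
by [].
Qed.

Lemma det_diag_rank1 (R : fieldType) k (e u v : 'I_k -> R) :
  (forall i, e i != 0) ->
  \det (diag_mx (\row_i e i) - (\col_i u i) *m (\row_i v i)) =
  (\prod_i e i) * (1 - \sum_i u i * v i / e i).
Proof.
move=> ne.
set E := diag_mx _; set E' := diag_mx (\row_i (e i)^-1).
set U := \col_i u i; set V := \row_i v i.
have EE' : E *m E' = 1%:M.
  rewrite mulmx_diag; apply/matrixP => i j; rewrite !mxE.
  by case: eqP => [->|]; rewrite ?mulr1n ?mulr0n ?divff.
have -> : E - U *m V = E *m (1%:M + (- (E' *m U)) *m V).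
  by rewrite mulmxDr mulmx1 mulNmx mulmxN !mulmxA EE' mul1mx.
rewrite det_mulmx det_sylvester det_mx11 det_diag; congr (_ * _).
  by apply: eq_bigr => i _; rewrite mxE.
rewrite !mxE eqxx mulr1n; congr (_ + _).
rewrite -sumrN; apply: eq_bigr => i _.
rewrite /E' mxE mxE mul_diag_mx !mxE mulrN; congr (- _).
by rewrite mulrCA mulrC (mulrC (v i)).
Qed.

Lemma poly_eq_gt (R : realFieldType) (p q : {poly R}) (b : R) :
  (forall x, b < x -> p.[x] = q.[x]) -> p = q.
Proof.
move=> H; apply/eqP; rewrite -subr_eq0; apply/negPn/negP => nz.
set rs := [seq b + (i.+1)%:R | i <- iota 0 (size (p - q))].
have H1 : all (root (p - q)) rs.
  apply/allP => x /mapP [i _ ->]; rewrite /root hornerD hornerN H ?subrr //.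
  by rewrite ltrDl ltr0Sn.
have H2 : uniq rs.
  rewrite map_inj_uniq ?iota_uniq // => i j /addrI /eqP.
  by rewrite eqr_nat => /eqP [].
by have := max_poly_roots nz H1 H2; rewrite size_map size_iota ltnn.
Qed.

Lemma secular_two (R : realFieldType) k (be ga : 'I_k -> R) (b : R) (p r : {poly R}) (t0 t1 : R) :
 (0 < k)%N -> (forall i, be i <= b) -> (forall i, 0 < ga i) ->
 (forall x, b < x -> p.[x] = \prod_i (x - be i) * (1 - \sum_i ga i / (x - be i))) ->
 p = ('X - t0%:P) * (('X - t1%:P) * r) -> b < t0 -> b < t1 -> False.
Proof.
move=> k0 hb hg hp pf h0 h1.
have pos x i : b < x -> 0 < x - be i.
  by move=> hx; rewrite subr_gt0; apply: le_lt_trans (hb i) hx.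
have ht0 : 1 = \sum_i ga i / (t0 - be i).
  have := hp t0 h0; rewrite pf hornerM hornerXsubC subrr mul0r => /esym/eqP.
  rewrite mulf_eq0 => /orP[|]; last by rewrite subr_eq0 => /eqP.
  by rewrite gt_eqF // prodr_gt0 // => i _; apply: pos.
set Q := \sum_i (ga i / (t0 - be i)) *: \prod_(j | j != i) ('X - (be j)%:P).
have eQ : p = ('X - t0%:P) * Q.
  apply: (@poly_eq_gt _ _ _ b) => x hx.
  rewrite hp // hornerM hornerXsubC horner_sum.
  have -> : 1 - \sum_i ga i / (x - be i) = \sum_i (ga i / (t0 - be i) - ga i / (x - be i)).
    by rewrite sumrB -ht0.
  rewrite !mulr_sumr; apply: eq_bigr => i _.
  rewrite hornerZ horner_prod (bigD1 i) //=.
  under [in RHS]eq_bigr do rewrite hornerXsubC.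
  set P := \prod_(j | j != i) _.
  have n1 : t0 - be i != 0 by rewrite gt_eqF // pos.
  have n2 : x - be i != 0 by rewrite gt_eqF // pos.
  have key : forall (X T B G P0 : R), T - B != 0 -> X - B != 0 ->
     (X - B) * P0 * (G / (T - B) - G / (X - B)) = (X - T) * (G / (T - B) * P0).
    by move=> X T B G P0 e1 e2; field; rewrite e1 e2.
  exact: key.
have eQ2 : Q = ('X - t1%:P) * r.
  by apply: (mulfI (monic_neq0 (monicXsubC t0))); rewrite -eQ.
have : Q.[t1] = 0 by rewrite eQ2 hornerM hornerXsubC subrr mul0r.
apply/eqP; rewrite gt_eqF // horner_sum (bigD1 (Ordinal k0)) //=.
have term i : 0 < ((ga i / (t0 - be i)) *: \prod_(j | j != i) ('X - (be j)%:P)).[t1].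
  rewrite hornerZ horner_prod mulr_gt0 ?divr_gt0 ?hg ?pos //.
  by apply: prodr_gt0 => j _; rewrite hornerXsubC pos.
have := term (Ordinal k0).
have : 0 <= \sum_(i | i != Ordinal k0) ((ga i / (t0 - be i)) *: \prod_(j | j != i) ('X - (be j)%:P)).[t1].
  by apply: sumr_ge0 => i _; apply: ltW.
lra.
Qed.

Lemma exists_root_ge (R : realFieldType) (t : seq R) (a : R) :
  (\prod_(x <- t) ('X - x%:P)).[a] <= 0 -> exists2 x, x \in t & a <= x.
Proof.
move=> H; case: (boolP (has (fun x => a <= x) t)) => [/hasP [x xt ax]|/hasPn h].
  by exists x.
exfalso; move: H; apply/negP; rewrite -ltNge horner_prod big_seq.
by apply: prodr_gt0 => x xt; rewrite hornerXsubC subr_gt0 ltNge h.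
Qed.

Lemma sum_if_eq (V : nmodType) (I : finType) (i0 : I) (a : I -> V) :
  \sum_i (if i0 == i then a i else 0) = a i0.
Proof.
rewrite (bigD1 i0) //= eqxx big1 ?addr0 // => i hi.
by rewrite eq_sym (negbTE hi).
Qed.

Lemma csize_sum (V : nmodType) n k (c : 'I_n -> 'I_k) (i : 'I_k) (a : V) :
  \sum_(j : 'I_n) (if c j == i then a else 0) = a *+ csize c i.
Proof.
by rewrite -big_mkcond /= sumr_const /csize cardsE.
Qed.

Lemma ThetaTT (R : realType) n k (c : 'I_n -> 'I_k) :
  (forall i, (0 < csize c i)%N) -> (Theta R c)^T *m Theta R c = 1%:M.
Proof.
move=> hpos; apply/matrixP => i i'; rewrite !mxE.
under eq_bigr => j _ do rewrite !mxE.
have -> : \sum_j ((if c j == i then (Num.sqrt (csize c i)%:R)^-1 else 0) *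
      (if c j == i' then (Num.sqrt (csize c i')%:R)^-1 else 0)) =
   \sum_j (if c j == i then (if i == i' then (Num.sqrt (csize c i)%:R)^-1 ^+ 2 else 0) else 0) :> R.
  apply: eq_bigr => j _; have [hi|hi] := eqVneq (c j) i; last by rewrite mul0r.
  rewrite ?hi ?eqxx; have [hii|hii] := eqVneq i i'; last by rewrite mulr0.
  by rewrite -hii expr2.
rewrite csize_sum; have [hii|hii] := eqVneq i i'; last by rewrite mul0rn.
rewrite -?hii.
rewrite mulr1n exprVn sqr_sqrtr ?ler0n // -mulr_natr.
have hm : (csize c i)%:R != 0 :> R by rewrite pnatr_eq0 -lt0n hpos.
by move: hm; set m := (csize c i)%:R => hm; field.
Qed.

Lemma sum_if_mull (V : comNzRingType) (I : finType) (i0 : I) (a f : I -> V) :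
  \sum_i (if i0 == i then a i else 0) * f i = a i0 * f i0.
Proof.
rewrite -(@sum_if_eq _ _ i0 (fun i => a i * f i)); apply: eq_bigr => i _.
by case: ifP; rewrite ?mul0r.
Qed.

Lemma sum_if_mulr (V : comNzRingType) (I : finType) (i0 : I) (a f : I -> V) :
  \sum_i f i * (if i0 == i then a i else 0) = f i0 * a i0.
Proof.
rewrite -(@sum_if_eq _ _ i0 (fun i => f i * a i)); apply: eq_bigr => i _.
by case: ifP; rewrite ?mulr0.
Qed.

Lemma Theta_conj (R : realType) n k (c : 'I_n -> 'I_k) (B : 'M[R]_k) j l :
  (Theta R c *m B *m (Theta R c)^T) j l =
  (Num.sqrt (csize c (c j))%:R)^-1 * B (c j) (c l) * (Num.sqrt (csize c (c l))%:R)^-1.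
Proof.
rewrite mxE.
rewrite (eq_bigr (fun i => (Num.sqrt (csize c (c j))%:R)^-1 * B (c j) i *
   (if c l == i then (Num.sqrt (csize c i)%:R)^-1 else 0))); last first.
  move=> i _; rewrite !mxE; congr (_ * _).
    rewrite -(@sum_if_mull _ _ (c j) (fun i => (Num.sqrt (csize c i)%:R)^-1) (fun i1 => B i1 i)).
    by apply: eq_bigr => i1 _; rewrite /Theta mxE.
by rewrite (@sum_if_mulr _ _ (c l) (fun i => (Num.sqrt (csize c i)%:R)^-1)).
Qed.

Lemma sumEabs (R : realType) n (p : R) (j : 'I_n) : \sum_l EabsA n p j l = p * (n.-1)%:R.
Proof.
rewrite (bigD1 j) //= !mxE eqxx add0r.
rewrite (eq_bigr (fun _ => p)); last by move=> l hl; rewrite mxE eq_sym (negbTE hl).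
by rewrite sumr_const cardC1 card_ord mulr_natr.
Qed.

Lemma Lsym_eq (R : realType) n k (c : 'I_n -> 'I_k) (p eta : R) :
  (2 <= n)%N -> 0 < p -> (forall i, (0 < csize c i)%N) ->
  Lsym c p eta = (alphabar n p eta)%:M - Theta R c *m Bbar c p eta *m (Theta R c)^T.
Proof.
move=> hn hp hpos; apply/matrixP => j l.
have -> : ((alphabar n p eta)%:M - Theta R c *m Bbar c p eta *m (Theta R c)^T) j l =
   alphabar n p eta *+ (j == l) - (Theta R c *m Bbar c p eta *m (Theta R c)^T) j l.
  by rewrite mxE [X in _ + X]mxE mxE.
rewrite Theta_conj /Lsym /= mul_mx_diag mul_diag_mx !mxE !eqxx !mulr1n !sumEabs.
rewrite /alphabar /dbar.
have m0 : (n.-1)%:R != 0 :> R by rewrite pnatr_eq0 -lt0n -ltnS prednK // ltnW.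
have mp : 0 < (n.-1)%:R :> R by rewrite lt0r m0 ler0n.
have hq : 0 < p * (n.-1)%:R by rewrite mulr_gt0.
have q0 : Num.sqrt (p * (n.-1)%:R) != 0 by rewrite gt_eqF // sqrtr_gt0.
have hq2 : Num.sqrt (p * (n.-1)%:R) ^+ 2 = p * (n.-1)%:R by rewrite sqr_sqrtr // ltW.
have sp i : Num.sqrt (csize c i)%:R != 0 :> R.
  by rewrite gt_eqF // sqrtr_gt0 ltr0n hpos.
have s2 i : (csize c i)%:R = Num.sqrt (csize c i)%:R ^+ 2 :> R.
  by rewrite sqr_sqrtr // ler0n.
have p0 : p != 0 by rewrite gt_eqF.
move: (sp (c j)) (sp (c l)) (s2 (c j)) (s2 (c l)).
rewrite sqrtrM ?ler0n //.
move: q0 hq2; set q := Num.sqrt (p * _); set m := (n.-1)%:R.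
set sj := Num.sqrt (csize c (c j))%:R; set sl := Num.sqrt (csize c (c l))%:R.
move=> q0 hq2 sj0 sl0 hsj hsl.
have hqi X : q^-1 * X / q = X / (p * m).
  by rewrite -hq2; field; rewrite q0.
rewrite hqi.
have [ejl|ejl] := eqVneq j l.
  subst l; rewrite eqxx /= !mulr1n mul0r subr0.
  have -> : sl = sj by [].
  rewrite hsj; field; by rewrite sj0 p0 m0.
rewrite /= mulr0n sub0r mulr0n sub0r; congr (- _).
have [ec|ec] := eqVneq (c j) (c l).
  have -> : sl = sj by rewrite /sl -ec.
  rewrite hsj; field; by rewrite sj0 p0 m0.
field; by rewrite sj0 sl0 p0 m0.
Qed.

Lemma char_poly_conj (R : realType) n k (T : 'M[R]_(n,k)) (B : 'M_k) (al : R) :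
  (k <= n)%N -> T^T *m T = 1%:M ->
  char_poly (al%:M - T *m B *m T^T) = ('X - al%:P)^+(n-k) * char_poly (al%:M - B).
Proof.
move=> kn hT; apply: (@poly_eq_gt _ _ _ al) => x hx.
rewrite hornerM horner_exp hornerXsubC !horner_char.
have d0 : x - al != 0 by rewrite subr_eq0 gt_eqF.
have E (m : nat) (M : 'M[R]_m) : x%:M - (al%:M - M) = (x - al) *: (1%:M + (x - al)^-1 *: M).
  rewrite opprB addrA scalerDr scalemx1 scalerA mulfV // scale1r.
  by rewrite addrAC; congr (_ + _); apply/matrixP=> i j; rewrite !mxE mulrnBl.
rewrite !E -!mulmxA !detZ scalemxAl det_sylvester -scalemxAr.
by rewrite -mulmxA hT mulmx1 mulrA -exprD subnK.
Qed.

Lemma chiC (R : realType) n k (c : 'I_n -> 'I_k) (p eta : R) (x : R) :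
  (2 <= n)%N -> 0 < p -> (forall i, (0 < csize c i)%N) ->
  (forall i, x - (alphabar n p eta - 2 * ((1 - 2 * eta) / (n.-1)%:R) * (csize c i)%:R) != 0) ->
  (char_poly (Cbar c p eta)).[x] =
  \prod_i (x - (alphabar n p eta - 2 * ((1 - 2 * eta) / (n.-1)%:R) * (csize c i)%:R)) *
  (1 - \sum_i ((1 - 2 * eta) / (n.-1)%:R * (csize c i)%:R) /
        (x - (alphabar n p eta - 2 * ((1 - 2 * eta) / (n.-1)%:R) * (csize c i)%:R))).
Proof.
move=> hn hp hpos hx.
set cc := (1 - 2 * eta) / (n.-1)%:R.
set e := fun i => x - (alphabar n p eta - 2 * cc * (csize c i)%:R).
set s := fun i : 'I_k => Num.sqrt (csize c i)%:R : R.
have m0 : (n.-1)%:R != 0 :> R by rewrite pnatr_eq0 -lt0n -ltnS prednK // ltnW.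
have p0 : p != 0 by rewrite gt_eqF.
have s2 i : (csize c i)%:R = s i ^+ 2 :> R by rewrite /s sqr_sqrtr // ler0n.
have pd : p / dbar n p = (n.-1)%:R^-1.
  by rewrite /dbar; field; rewrite p0 m0.
rewrite horner_char.
have -> : x%:M - Cbar c p eta = diag_mx (\row_i e i) - (\col_i (cc * s i)) *m (\row_i s i).
  apply/matrixP => i i'; rewrite /Cbar !mxE big_ord1 !mxE /e /dbar /alphabar /dbar.
  have [ei|ei] := eqVneq i i'.
    subst i'; rewrite !mulr1n s2 /cc; field; by rewrite p0 m0.
  rewrite !mulr0n sqrtrM ?ler0n // -[Num.sqrt (csize c i)%:R]/(s i).
  rewrite -[Num.sqrt (csize c i')%:R]/(s i') /cc; field; by rewrite p0 m0.
rewrite det_diag_rank1 //; congr (_ * (1 - _)).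
by apply: eq_bigr => i _; rewrite /e s2 /cc expr2 !mulrA.
Qed.

Lemma bigmin_le (I : finType) (F : I -> nat) x0 i : (\big[minn/x0]_j F j <= F i)%N.
Proof.
move: (mem_index_enum i); rewrite /index_enum; elim: (Finite.enum I) => [//|a r IH].
rewrite inE big_cons => /orP [/eqP ->|/IH h]; first exact: geq_minl.
exact: leq_trans (geq_minr _ _) h.
Qed.

Lemma csize_pos n k (c : 'I_n -> 'I_k) :
  (forall i : 'I_k, exists j : 'I_n, c j = i) -> forall i, (0 < csize c i)%N.
Proof.
move=> hc i; have [j hj] := hc i; apply/card_gt0P; exists j.
by rewrite inE hj.
Qed.

Lemma sum_csize n k (c : 'I_n -> 'I_k) : (\sum_i csize c i)%N = n.
Proof.
have -> : (\sum_i csize c i = \sum_i \sum_j (c j == i))%N.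
  apply: eq_bigr => i _; rewrite /csize cardsE -sum1_card big_mkcond /=.
  by apply: eq_bigr => j _; rewrite unfold_in /=; change (eqn (c j) i) with (c j == i); case: (c j == i).
rewrite exchange_big /= -[n in RHS]card_ord -sum1_card.
apply: eq_bigr => j _; rewrite (bigD1 (c j)) //= eqxx big1 ?addn0 // => i hi.
by rewrite eq_sym (negbTE hi).
Qed.

Lemma rho_bound (R : realType) n k (c : 'I_n -> 'I_k) :
  (2 <= k)%N -> (forall i, (0 < csize c i)%N) ->
  1 - 1 / (4 * k%:R * (2 + Num.sqrt k%:R)) < Num.sqrt (aspect_ratio R c) ->
  forall i, n%:R < 2 * k%:R * (csize c i)%:R :> R.
Proof.
move=> hk hpos hr i.
move: hr; rewrite /aspect_ratio.
set a := (\big[minn/n]_i csize c i)%N; set b := (\max_i csize c i)%N => hr.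
have ha : (a <= csize c i)%N by apply: bigmin_le.
have hb0 : (0 < b)%N by apply: leq_trans (hpos i) (leq_bigmax i).
have hnb : (n <= k * b)%N.
  rewrite -{1}(@sum_csize n k c).
  apply: (@leq_trans (\sum_(j < k) b)); first by apply: leq_sum => j _; apply: leq_bigmax.
  by rewrite sum_nat_const card_ord.
have hkR : 2 <= k%:R :> R by rewrite (ler_nat R 2 k).
have hsk : 0 <= Num.sqrt k%:R :> R := sqrtr_ge0 _.
have hD : 16 <= 4 * k%:R * (2 + Num.sqrt k%:R) :> R by nra.
have h1 : 1 / (4 * k%:R * (2 + Num.sqrt k%:R)) <= 1 / 16 :> R.
  rewrite !div1r lef_pV2 ?posrE //; lra.
have hbR : 0 < b%:R :> R by rewrite ltr0n.
have hrho0 : 0 <= a%:R / b%:R :> R by rewrite divr_ge0.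
have hs := sqr_sqrtr hrho0.
have hs0 := sqrtr_ge0 (a%:R / b%:R : R).
have hrho : 1/2 < a%:R / b%:R :> R.
  rewrite -hs; nra.
move: hrho; rewrite ltr_pdivlMr // => hrho.
have hnR : n%:R <= k%:R * b%:R :> R by rewrite -natrM ler_nat.
have haR : a%:R <= (csize c i)%:R :> R by rewrite ler_nat.
have hk0 : 0 <= k%:R :> R by lra.
nra.
Qed.

Lemma ge_trans (R : realType) : transitive (fun x y : R => y <= x).
Proof. by move=> a b c h1 h2; apply: le_trans h2 h1. Qed.

Lemma ge_anti (R : realType) : antisymmetric (fun x y : R => y <= x).
Proof. by move=> a b /andP [h1 h2]; apply/le_anti; rewrite h1 h2. Qed.

Lemma ge_total (R : realType) : total (fun x y : R => y <= x).
Proof. by move=> a b; rewrite orbC le_total. Qed.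

Lemma spec_uniq (R : realType) N (L : 'M[R]_N) s s' :
  is_spectrum L s -> is_spectrum L s' -> s = s'.
Proof.
case=> _ h1 h2 [_ h1' h2']; apply: (sorted_eq (@ge_trans R) (@ge_anti R)) => //.
by apply: prod_XsubC_eq; rewrite -h2 -h2'.
Qed.

Lemma specC_exists (R : realType) n k (L : 'M[R]_n) (C : 'M[R]_k) (al : R) s :
  char_poly L = ('X - al%:P)^+(n-k) * char_poly C -> is_spectrum L s ->
  exists t, is_spectrum C t.
Proof.
move=> hchi [hsz hsort hch].
have hd : char_poly C %| \prod_(x <- s) ('X - x%:P) by rewrite -hch hchi dvdp_mulIr.
have [m hm] := dvdp_prod_XsubC hd.
move: hm; rewrite eqp_monic ?char_poly_monic ?monic_prod_XsubC // => /eqP hm.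
exists (sort (fun x y : R => y <= x) (mask m s)); split.
- have := size_char_poly C; rewrite hm size_prod_XsubC => [[<-]].
  by rewrite size_sort.
- exact: sort_sorted (@ge_total R) _.
- by rewrite hm; apply: perm_big; rewrite perm_sym perm_sort.
Qed.

Lemma path_nseq (R : realType) (al : R) m l :
  path (fun x y : R => y <= x) al l -> path (fun x y : R => y <= x) al (nseq m al ++ l).
Proof. by move=> h; elim: m => [|m IH] //=; rewrite lexx IH. Qed.

Lemma prod_nseq (R : realType) m (al : R) :
  \prod_(x <- nseq m al) ('X - x%:P) = ('X - al%:P) ^+ m.
Proof. by elim: m => [|m IH]; rewrite ?big_nil ?expr0 // big_cons IH exprS. Qed.

Lemma specL_of (R : realType) n k (L : 'M[R]_n) (C : 'M[R]_k) (al g t0 t1 : R) rest :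
  (k <= n)%N -> 0 < g -> char_poly L = ('X - al%:P)^+(n-k) * char_poly C ->
  is_spectrum C [:: t0, t1 & rest] -> al <= t0 -> t1 <= al - g ->
  is_spectrum L (t0 :: nseq (n-k) al ++ t1 :: rest).
Proof.
move=> kn g0 hchi [hsz hsort hch] h0 h1; split.
- by move: hsz kn; rewrite /= size_cat size_nseq /=; lia.
- case: (n - k)%N => [//|m] /=; rewrite h0 /=.
  apply: path_nseq => /=; move: hsort => /= /andP [_ ->]; rewrite andbT.
  by apply: le_trans h1 _; lra.
- rewrite hchi hch -prod_nseq -big_cat /=; apply: perm_big.
  by rewrite -cat1s perm_catCA.
Qed.

Lemma goodC (R : realType) n k (c : 'I_n -> 'I_k) (p eta : R) t :
 (2 <= n)%N -> (2 <= k)%N -> 0 < p -> 0 <= eta < 1/2 -> (forall i, (0 < csize c i)%N) ->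
 (forall i, n%:R < 2 * k%:R * (csize c i)%:R :> R) ->
 is_spectrum (Cbar c p eta) t ->
 exists t0 t1 rest, [/\ t = [:: t0, t1 & rest], alphabar n p eta <= t0 &
    t1 <= alphabar n p eta - (1 - 2 * eta) / k%:R].
Proof.
move=> hn hk hp /andP [he0 he1] hpos hb ht.
set al := alphabar n p eta; set cc := (1 - 2 * eta) / (n.-1)%:R.
have e0 : 0 < 1 - 2 * eta by lra.
have m0 : 0 < (n.-1)%:R :> R by rewrite ltr0n -ltnS prednK // ltnW.
have mn : (n.-1)%:R <= n%:R :> R by rewrite ler_nat leq_pred.
have k0 : 0 < k%:R :> R by rewrite ltr0n ltnW.
have cc0 : 0 < cc by rewrite divr_gt0.
have nip i : 0 < (csize c i)%:R :> R by rewrite ltr0n.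
have key i : (1 - 2 * eta) / k%:R <= 2 * cc * (csize c i)%:R.
  rewrite ler_pdivrMr //.
  have -> : 2 * cc * (csize c i)%:R * k%:R =
     (1 - 2 * eta) * (2 * (csize c i)%:R * k%:R / (n.-1)%:R).
    by rewrite /cc; field; rewrite gt_eqF.
  rewrite ler_peMr ?ltW // ltr_pdivlMr // mul1r.
  by have := hb i; rewrite mulrAC; lra.
have c2 i : 0 < 2 * cc * (csize c i)%:R.
  by apply: mulr_gt0 => //; apply: mulr_gt0 => //; lra.
case: ht => hsz hsort hch.
case: t hsz hsort hch => [|t0 [|t1 rest]] hsz hsort hch; try by move: hk; rewrite -hsz.
have t10 : t1 <= t0 by move: hsort => /= /andP [].
exists t0, t1, rest; split => //.
  have hal : (char_poly (Cbar c p eta)).[al] <= 0.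
    have E i : al - (al - 2 * cc * (csize c i)%:R) = 2 * cc * (csize c i)%:R by ring.
    rewrite chiC //; last by move=> i; rewrite E gt_eqF.
    apply: mulr_ge0_le0; first by apply: prodr_ge0 => i _; rewrite E ltW.
    have -> : \sum_i cc * (csize c i)%:R / (al - (al - 2 * cc * (csize c i)%:R)) =
        \sum_(i < k) (1 / 2 : R).
      apply: eq_bigr => i _; rewrite E; field.
      by rewrite !gt_eqF.
    rewrite sumr_const card_ord -mulr_natr.
    have : 2 <= k%:R :> R by rewrite (ler_nat R 2 k).
    lra.
  have hal' : (\prod_(x <- [:: t0, t1 & rest]) ('X - x%:P)).[al] <= 0 by rewrite -hch.
  have [x xt hx] := @exists_root_ge _ _ _ hal'.
  apply: le_trans hx _.
  move: xt; rewrite inE => /orP [/eqP -> //|xt].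
  have hpa : path (fun x y : R => y <= x) t0 (t1 :: rest) := hsort.
  move: hpa; rewrite (path_sortedE (@ge_trans R)) => /andP [/allP /(_ x xt) h _].
  exact: h.
rewrite leNgt; apply/negP => hlt.
apply: (@secular_two R k (fun i => al - 2 * cc * (csize c i)%:R) (fun i => cc * (csize c i)%:R)
   (al - (1 - 2 * eta) / k%:R) (char_poly (Cbar c p eta)) (\prod_(x <- rest) ('X - x%:P)) t0 t1).
- exact: ltnW.
- by move=> i; have := key i; lra.
- by move=> i; rewrite mulr_gt0.
- move=> y hy; rewrite chiC // => i; rewrite gt_eqF // -/al -/cc.
  by have := key i; lra.
- by rewrite hch !big_cons.
- exact: lt_le_trans hlt t10.
- exact: hlt.
Qed.

Lemma nth_specL (R : realType) n k (al t0 t1 : R) rest (j : nat) :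
  size [:: t0, t1 & rest] = k -> (k <= n)%N -> (j < k.-1)%N ->
  nth 0 (t0 :: nseq (n - k) al ++ t1 :: rest) (n.-1 - j) =
  nth 0 [:: t0, t1 & rest] (k.-1 - j).
Proof.
move=> hsz kn hj.
have -> : (n.-1 - j = ((n - k) + (k.-1 - j).-1).+1)%N by lia.
have -> : (k.-1 - j = (k.-1 - j).-1.+1)%N by lia.
by rewrite /= nth_cat size_nseq ltnNge leq_addr /= addKn.
Qed.

Lemma nth_le1 (R : realType) (t0 t1 : R) rest i :
  sorted (fun x y : R => y <= x) [:: t0, t1 & rest] -> (1 <= i)%N ->
  (i < size [:: t0, t1 & rest])%N -> nth 0 [:: t0, t1 & rest] i <= t1.
Proof.
move=> hs h1 h2.
have := @sorted_leq_nth _ _ (@ge_trans R) (fun x => lexx x) 0 _ hs 1 i.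
by apply => //; rewrite inE //; apply: leq_ltn_trans h1 h2.
Qed.

Lemma col_ext (R : realType) m l (V W : 'M[R]_(m, l)) :
  (forall j, col j V = col j W) -> V = W.
Proof.
move=> h; apply/matrixP => i j; have := h j; move/matrixP/(_ i 0).
by rewrite !mxE.
Qed.

Lemma col_mulmx (R : realType) m l q (A : 'M[R]_(m, l)) (V : 'M[R]_(l, q)) j :
  col j (A *m V) = A *m col j V.
Proof. by rewrite !colE mulmxA. Qed.

Theorem mainTheorem17 (R : realType) (n k : nat) (p eta : R)
  (c : 'I_n -> 'I_k)
  (hn : (2 <= n)%N) (hk : (2 <= k)%N)
  (hp : 0 < p <= 1) (heta : 0 <= eta < 1 / 2)
  (hc : forall i : 'I_k, exists j : 'I_n, c j = i)
  (hrho : 1 - 1 / (4 * k%:R * (2 + Num.sqrt k%:R)) < Num.sqrt (aspect_ratio R c)) :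
  (forall V : 'M[R]_(n, k.-1),
     is_V_smallest (Lsym c p eta) V <->
     exists Rm : 'M[R]_(k, k.-1),
       is_V_smallest (Cbar c p eta) Rm /\ V = Theta R c *m Rm)
  /\
  (forall s : seq R, is_spectrum (Lsym c p eta) s ->
     (1 - 2 * eta) / k%:R <= nth 0 s (n - k) - nth 0 s (n - k + 1)).
Proof.
have hpos := @csize_pos n k c hc.
have hb := @rho_bound R n k c hk hpos hrho.
case/andP: (hp) => hp0 hp1.
have kn : (k <= n)%N.
  rewrite -[n in (_ <= n)%N](@sum_csize n k c) -[k in (k <= _)%N]card_ord -sum1_card.
  by apply: leq_sum => i _; apply: hpos.
set T := Theta R c; set B := Bbar c p eta; set al := alphabar n p eta.
set L := Lsym c p eta; set C := Cbar c p eta.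
have hTT : T^T *m T = 1%:M := @ThetaTT R n k c hpos.
have hL : L = al%:M - T *m B *m T^T := @Lsym_eq R n k c p eta hn hp0 hpos.
have hC : C = al%:M - B by [].
have hchi : char_poly L = ('X - al%:P)^+(n-k) * char_poly C.
  by rewrite hL hC; apply: char_poly_conj.
have g0 : 0 < (1 - 2 * eta) / k%:R.
  case/andP: heta => _ he; rewrite divr_gt0 ?ltr0n ?(ltnW hk) //; lra.
have hLT : L *m T = T *m C.
  rewrite hL hC mulmxBl mulmxBr mul_scalar_mx mul_mx_scalar -!mulmxA hTT mulmx1.
  by [].
have hTL : T^T *m L = C *m T^T.
  rewrite hL hC mulmxBl mulmxBr mul_scalar_mx mul_mx_scalar !mulmxA hTT mul1mx.
  by [].
split; last first.
  move=> s hs; have [t ht] := @specC_exists R n k L C al s hchi hs.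
  have [t0 [t1 [rest [et h0 h1]]]] := @goodC R n k c p eta t hn hk hp0 heta hpos hb ht.
  rewrite -/al in h0 h1.
  subst t; have hsL := @specL_of R n k L C al _ t0 t1 rest kn g0 hchi ht h0 h1.
  rewrite (@spec_uniq R n L _ _ hs hsL).
  have e1 : nth 0 (t0 :: nseq (n - k) al ++ t1 :: rest) (n - k + 1) = t1.
    by rewrite addn1 /= nth_cat size_nseq ltnn subnn.
  rewrite e1.
  case E: (n - k)%N => [|m] /=; first lra.
  change (al :: nseq m al ++ t1 :: rest) with (nseq m.+1 al ++ t1 :: rest).
  rewrite nth_cat size_nseq ltnSn nth_nseq ltnSn; lra.
move=> V; split.
  case=> s [hs [hVV heig]].
  have [t ht] := @specC_exists R n k L C al s hchi hs.
  have [t0 [t1 [rest [et h0 h1]]]] := @goodC R n k c p eta t hn hk hp0 heta hpos hb ht.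
  rewrite -/al in h0 h1; subst t.
  have hsL := @specL_of R n k L C al _ t0 t1 rest kn g0 hchi ht h0 h1.
  have es := @spec_uniq R n L _ _ hs hsL; subst s.
  have hlam (j : 'I_k.-1) : nth 0 (t0 :: nseq (n - k) al ++ t1 :: rest) (n.-1 - j) =
      nth 0 [:: t0, t1 & rest] (k.-1 - j).
    by apply: nth_specL => //; case: ht.
  have hcol (j : 'I_k.-1) : T *m T^T *m col j V = col j V.
    set v := col j V; set lam := nth 0 [:: t0, t1 & rest] (k.-1 - j).
    have hlt : lam < al.
      case: ht => hsz hsort _.
      have := @nth_le1 R t0 t1 rest (k.-1 - j) hsort.
      have hj := ltn_ord j.
      rewrite hsz; move=> /(_ _ _) hle.
      have := hle ltac:(lia) ltac:(lia); rewrite -/lam => hl.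
      lra.
    have ev : L *m v = lam *: v by rewrite /v heig hlam.
    have ev2 : (al - lam) *: v = T *m (B *m T^T *m v).
      move: ev; rewrite hL mulmxBl mul_scalar_mx -!mulmxA => ev.
      rewrite scalerBl -ev; apply/matrixP => a b; rewrite !mxE; ring.
    have hv : v = T *m ((al - lam)^-1 *: (B *m T^T *m v)).
      rewrite -scalemxAr -ev2 scalerA mulVf ?scale1r //.
      by rewrite subr_eq0 gt_eqF.
    by rewrite hv -!mulmxA [T^T *m (T *m _)]mulmxA hTT mul1mx.
  have hV : V = T *m (T^T *m V).
    by apply: col_ext => j; rewrite col_mulmx col_mulmx mulmxA hcol.
  exists (T^T *m V); split => //.
  exists [:: t0, t1 & rest]; split => //; split.
    rewrite trmx_mul trmxK mulmxA -[V^T *m T *m T^T]mulmxA.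
    have -> : V^T *m (T *m T^T) = (T *m T^T *m V)^T by rewrite trmx_mul trmx_mul trmxK mulmxA.
    by rewrite -mulmxA -hV hVV.
  move=> j; rewrite col_mulmx mulmxA -hTL -mulmxA heig hlam.
  by rewrite -scalemxAr.
case=> Rm [[t [ht [hRR heig]]] ->].
have [t0 [t1 [rest [et h0 h1]]]] := @goodC R n k c p eta t hn hk hp0 heta hpos hb ht.
rewrite -/al in h0 h1; subst t.
have hsL := @specL_of R n k L C al _ t0 t1 rest kn g0 hchi ht h0 h1.
exists (t0 :: nseq (n - k) al ++ t1 :: rest); split => //; split.
  by rewrite trmx_mul mulmxA -[Rm^T *m T^T *m T]mulmxA hTT mulmx1.
move=> j; rewrite col_mulmx mulmxA hLT -mulmxA heig.
rewrite (@nth_specL R n k al t0 t1 rest j) //; last by case: ht.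
by rewrite scalemxAr.
Qed.
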